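(* Let $K\subseteq\mathbb{C}$ be a number field of class number $1$ stable under complex conjugation, with ring of integers $\mathcal{O}_K$, and let $K_0:=K\cap\mathbb{R}$, $\mathcal{O}_{K_0}:=K_0\cap\mathcal{O}_K$. Suppose $a,b\in\mathcal{O}_{K_0}$ satisfy $a\mid b$ and $a=\alpha\overline{\alpha}$, $b=\beta\overline{\beta}$ for some $\alpha,\beta\in\mathcal{O}_K$. Then there exists $\alpha_1\in\mathcal{O}_K$ dividing $\beta$ such that $\alpha_1\overline{\alpha_1}=\alpha\overline{\alpha}$. In particular $b/a=\gamma\overline{\gamma}$ with $\gamma=\beta/\alpha_1\in\mathcal{O}_K$. *)

(* Defs.v *)
From mathcomp Require Import all_boot all_order all_algebra all_field.
Set Implicit Arguments. Unset Strict Implicit. Unset Printing Implicit Defensive.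
Import Order.TTheory GRing.Theory Num.Theory.
Local Open Scope ring_scope.

(* The number field K = Q(theta) inside algC (every number field K ⊆ C is of this form,
   by the primitive element theorem, and lies in the algebraic numbers algC). *)
Definition in_numfield (theta x : algC) : Prop :=
  exists p : {poly rat}, x = (map_poly ratr p).[theta].

Definition in_OK (theta x : algC) : Prop := in_numfield theta x /\ x \in Aint.

Definition in_OK0 (theta x : algC) : Prop := in_OK theta x /\ x \is Num.real.

Definition conj_stable (theta : algC) : Prop :=
  forall x, in_numfield theta x -> in_numfield theta x^*.

Definition is_ideal (O I : algC -> Prop) : Prop :=
  [/\ (forall x, I x -> O x), I 0,
      (forall x y, I x -> I y -> I (x + y)) &
      (forall r x, O r -> I x -> I (r * x))].

Definition class_number_one (theta : algC) : Prop :=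
  forall I : algC -> Prop, is_ideal (in_OK theta) I ->
    exists g, in_OK theta g /\
      (forall x, I x <-> exists r, in_OK theta r /\ x = g * r).

(* Main.v *)
Require Import Defs.
From mathcomp Require Import all_boot all_order all_algebra all_field.
From mathcomp Require Import algC algnum.
From mathcomp Require Import ring.
Import Order.TTheory GRing.Theory Num.Theory.
Local Open Scope ring_scope.

Lemma OK0 theta : in_OK theta 0.
Proof. split; last exact: Aint0. exists 0; by rewrite map_poly0 horner0. Qed.

Lemma OK1 theta : in_OK theta 1.
Proof. split; last exact: Aint1. exists 1; by rewrite rmorph1 hornerC. Qed.

Lemma OKD theta x y : in_OK theta x -> in_OK theta y -> in_OK theta (x + y).
Proof.
move=> [[p ->] hx] [[q ->] hy]; split; last exact: rpredD.
by exists (p + q); rewrite rmorphD hornerD.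
Qed.

Lemma OKM theta x y : in_OK theta x -> in_OK theta y -> in_OK theta (x * y).
Proof.
move=> [[p ->] hx] [[q ->] hy]; split; last exact: rpredM.
by exists (p * q); rewrite rmorphM hornerM.
Qed.

Lemma OKC theta x : conj_stable theta -> in_OK theta x -> in_OK theta x^*.
Proof. move=> hc [hx hi]; split; first exact: hc. by rewrite (Aint_aut Num.conj_op). Qed.

Lemma cM (x y : algC) : (x*y)^* = x^* * y^*.
Proof. exact: rmorphM. Qed.

Theorem mainTheorem3 (theta : algC)
  (hconj : conj_stable theta) (hcl : class_number_one theta)
  (a b alpha beta : algC)
  (ha : in_OK0 theta a) (hb : in_OK0 theta b)
  (hab : exists c, in_OK0 theta c /\ b = a * c)
  (halpha : in_OK theta alpha) (hbeta : in_OK theta beta)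
  (hanorm : a = alpha * alpha^*) (hbnorm : b = beta * beta^*) :
  exists alpha1 gamma : algC,
    [/\ in_OK theta alpha1, in_OK theta gamma, beta = alpha1 * gamma,
        alpha1 * alpha1^* = alpha * alpha^* & b = a * (gamma * gamma^*)].
Proof.
have [c [[hc hcr] bac]] := hab.
have cc : c^* = c by apply/eqP; rewrite -CrealE.
pose I := fun x => exists r s, [/\ in_OK theta r, in_OK theta s & x = r * alpha + s * beta].
have hI : is_ideal (in_OK theta) I.
  split.
  - by move=> x [r [s [hr hs ->]]]; apply: OKD; apply: OKM.
  - by exists 0, 0; split; [exact: OK0|exact: OK0|rewrite !mul0r addr0].
  - move=> x y [r [s [hr hs ->]]] [r' [s' [hr' hs' ->]]].
    exists (r + r'), (s + s'); split; [exact: OKD|exact: OKD|].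
    by rewrite !mulrDl addrACA.
  - move=> t x ht [r [s [hr hs ->]]].
    exists (t * r), (t * s); split; [exact: OKM|exact: OKM|].
    by rewrite mulrDr !mulrA.
have [g [hg hgI]] := hcl I hI.
have [u [v [hu hv gE]]] : I g by apply/hgI; exists 1; split; [exact: OK1|rewrite mulr1].
have [al [hal aE]] : exists r, in_OK theta r /\ alpha = g * r.
  apply/hgI; exists 1, 0; split; [exact: OK1|exact: OK0|by rewrite mul1r mul0r addr0].
have [be [hbe bE]] : exists r, in_OK theta r /\ beta = g * r.
  apply/hgI; exists 0, 1; split; [exact: OK0|exact: OK1|by rewrite mul1r mul0r add0r].
have [g0|gn0] := eqVneq g 0.
  exists 0, 0; split; [exact: OK0|exact: OK0|by rewrite bE g0 !mul0r|by rewrite aE g0 !mul0r|].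
  by rewrite hbnorm bE g0 !mul0r ?rmorph0 ?mulr0 ?mul0r.
have gcn0 : g * g^* != 0 by rewrite mulf_neq0 // conjC_eq0.
have eq1 : al * al^* * c = be * be^*.
  apply: (mulfI gcn0).
  rewrite mulrA.
  have -> : g * g^* * (al * al^*) = alpha * alpha^* by rewrite aE cM; ring.
  rewrite -hanorm -bac hbnorm bE cM; ring.
have one : 1 = u * al + v * be.
  apply: (mulfI gn0); rewrite mulr1 {1}gE aE bE; ring.
pose d := u * be^* + v * al^* * c.
have hd : be^* = al * d.
  transitivity ((u*al+v*be)*be^*); first by rewrite -one mul1r.
  transitivity (u*al*be^* + v*(be*be^*)); first ring.
  rewrite -eq1 /d; ring.
have hdC : be = al^* * d^*.
  by rewrite -[LHS]conjCK hd cM.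
exists (g * al^*), d^*; split.
- by apply: OKM => //; apply: OKC.
- apply: OKC => //; apply: OKD; apply: OKM => //; [exact: OKC|apply: OKM => //; exact: OKC].
- by rewrite bE hdC mulrA.
- by rewrite aE !cM ?conjCK; ring.
- rewrite hbnorm hanorm bE aE hdC !cM ?conjCK; ring.
Qed.
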